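(* For any polynomial monad $(t,\eta,\mu)$, the $\mathbf{Cat}^\sharp$-enriched category $\mathbf{Dyn}_t$ has (enriched) coproducts: for any sets $A,B$ there are morphisms $i\colon\mathcal{y}\to\mathfrak{c}_{h^t_{A,A+B}}$ and $j\colon\mathcal{y}\to\mathfrak{c}_{h^t_{B,A+B}}$ in $\mathbf{Cat}^\sharp$ such that for every set $C$, every $v\in\mathbf{Cat}^\sharp$ and every pair of $\mathbf{Cat}^\sharp$-maps $f\colon v\to\mathfrak{c}_{h^t_{A,C}}$, $g\colon v\to\mathfrak{c}_{h^t_{B,C}}$, there is a unique $\mathbf{Cat}^\sharp$-map $(f,g)\colon v\to\mathfrak{c}_{h^t_{A+B,C}}$ such that the composite $v\cong\mathcal{y}\otimes v\xrightarrow{i\otimes(f,g)}\mathfrak{c}_{h^t_{A,A+B}}\otimes\mathfrak{c}_{h^t_{A+B,C}}\xrightarrow{\ ;\ }\mathfrak{c}_{h^t_{A,C}}$ equals $f$ and the composite $v\cong\mathcal{y}\otimes v\xrightarrow{j\otimes(f,g)}\mathfrak{c}_{h^t_{B,A+B}}\otimes\mathfrak{c}_{h^t_{A+B,C}}\xrightarrow{\ ;\ }\mathfrak{c}_{h^t_{B,C}}$ equals $g$, where $;$ denotes the composition of $\mathbf{Dyn}_t$.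
   Context: $\mathbf{Poly}$ is the category of polynomial functors on $\mathbf{Set}$; $\triangleleft$ is composition, $\otimes$ the Dirichlet product (unit $\mathcal{y}$), $[-,-]$ the internal hom for $\otimes$, and $A\mathcal{y}=\sum_{a\in A}\mathcal{y}$ for a set $A$. A polynomial monad is a $\triangleleft$-monoid $(t,\eta,\mu)$ in $\mathbf{Poly}$. $\mathbf{Cat}^\sharp$ is the category of $\triangleleft$-comonoids in $\mathbf{Poly}$ (equivalently categories and cofunctors), monoidal under $\otimes$; $\mathfrak{c}_{-}\colon\mathbf{Poly}\to\mathbf{Cat}^\sharp$ is the cofree comonoid functor, right adjoint to the forgetful functor, and lax monoidal. Put $h^t_{A,B}:=[A\mathcal{y},t\triangleleft B\mathcal{y}]$. $\mathbf{Dyn}_t$ is the $\mathbf{Cat}^\sharp$-enriched category with objects sets and hom-objects $\mathfrak{c}_{h^t_{A,B}}$, with identities and composition $\mathfrak{c}_{h^t_{A,B}}\otimes\mathfrak{c}_{h^t_{B,C}}\to\mathfrak{c}_{h^t_{A,C}}$ induced, via the lax monoidal structure of $\mathfrak{c}_{-}$, from the $\mathbf{Poly}$-enriched structure on the $h^t_{A,B}$ (identity from $\eta$, composition from evaluation, the duoidal map $(t\triangleleft B\mathcal{y})\otimes(\mathcal{y}\triangleleft h)\to(t\otimes\mathcal{y})\triangleleft(B\mathcal{y}\otimes h)$, and $\mu$). *)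

(* Defs.v *)
From Stdlib Require Import List ProofIrrelevance FunctionalExtensionality
  ClassicalEpsilon Eqdep.
Import ListNotations.

(* p = sum_{i : pos p} y^{dir p i} *)
Record poly : Type := Poly { pos : Type ; dir : pos -> Type }.

Record pmor (p q : poly) : Type := PMor {
  onpos : pos p -> pos q ;
  ondir : forall i : pos p, dir q (onpos i) -> dir p i }.
Arguments PMor {p q} _ _.
Arguments onpos {p q} _ _.
Arguments ondir {p q} _ _ _.

Definition pid (p : poly) : pmor p p := PMor (fun i => i) (fun i d => d).

Definition pcomp {p q r : poly} (g : pmor q r) (f : pmor p q) : pmor p r :=
  PMor (fun i => onpos g (onpos f i))
       (fun i d => ondir f i (ondir g (onpos f i) d)).

Definition yy : poly := Poly unit (fun _ => unit).
Definition lin (A : Type) : poly := Poly A (fun _ => unit).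

Definition tri (p q : poly) : poly :=
  Poly {i : pos p & dir p i -> pos q}
       (fun x => {d : dir p (projT1 x) & dir q (projT2 x d)}).

Definition tens (p q : poly) : poly :=
  Poly (pos p * pos q) (fun x => (dir p (fst x) * dir q (snd x))%type).

Definition ihom (p q : poly) : poly :=
  Poly (pmor p q) (fun f => {i : pos p & dir q (onpos f i)}).

Definition tri_map {p p' q q' : poly} (f : pmor p p') (g : pmor q q')
  : pmor (tri p q) (tri p' q') :=
  @PMor (tri p q) (tri p' q')
    (fun x => existT (fun i' => dir p' i' -> pos q') (onpos f (projT1 x))
                (fun d' => onpos g (projT2 x (ondir f (projT1 x) d'))))
    (fun x e => existT (fun d => dir q (projT2 x d))
                  (ondir f (projT1 x) (projT1 e))
                  (ondir g (projT2 x (ondir f (projT1 x) (projT1 e))) (projT2 e))).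

Definition tens_map {p p' q q' : poly} (f : pmor p p') (g : pmor q q')
  : pmor (tens p q) (tens p' q') :=
  @PMor (tens p q) (tens p' q')
    (fun x => (onpos f (fst x), onpos g (snd x)))
    (fun x e => (ondir f (fst x) (fst e), ondir g (snd x) (snd e))).

Definition lamI (p : poly) : pmor p (tri yy p) :=
  @PMor p (tri yy p) (fun i => existT (fun _ : unit => unit -> pos p) tt (fun _ => i))
    (fun i e => projT2 e).

Definition rhoI (p : poly) : pmor p (tri p yy) :=
  @PMor p (tri p yy) (fun i => existT (fun i => dir p i -> unit) i (fun _ => tt))
    (fun i e => projT1 e).

Definition assoc (p q r : poly) : pmor (tri (tri p q) r) (tri p (tri q r)) :=
  @PMor (tri (tri p q) r) (tri p (tri q r))
    (fun X => existT (fun i => dir p i -> pos (tri q r)) (projT1 (projT1 X))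
       (fun d => existT (fun j : pos q => dir q j -> pos r) (projT2 (projT1 X) d)
                   (fun e => projT2 X (existT _ d e))))
    (fun X w => existT (fun de => dir r (projT2 X de))
                  (existT (fun d => dir q (projT2 (projT1 X) d)) (projT1 w) (projT1 (projT2 w)))
                  (projT2 (projT2 w))).

Definition assocI (p q r : poly) : pmor (tri p (tri q r)) (tri (tri p q) r) :=
  @PMor (tri p (tri q r)) (tri (tri p q) r)
    (fun X => existT (fun x : pos (tri p q) => dir (tri p q) x -> pos r)
       (existT (fun i => dir p i -> pos q) (projT1 X) (fun d => projT1 (projT2 X d)))
       (fun de => projT2 (projT2 X (projT1 de)) (projT2 de)))
    (fun X w => existT (fun d => dir (tri q r) (projT2 X d)) (projT1 (projT1 w))
        (existT (fun e => dir r (projT2 (projT2 X (projT1 (projT1 w))) e))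
           (projT2 (projT1 w)) (projT2 w))).

Definition unitL (p : poly) : pmor p (tens yy p) :=
  @PMor p (tens yy p) (fun i => (tt, i)) (fun i e => snd e).

Definition runit (p : poly) : pmor (tens p yy) p :=
  @PMor (tens p yy) p (fun x => fst x) (fun x d => (d, tt)).

Definition tsym (p q : poly) : pmor (tens p q) (tens q p) :=
  @PMor (tens p q) (tens q p) (fun x => (snd x, fst x)) (fun x e => (snd e, fst e)).

Definition rearr (a b c : poly) : pmor (tens (tens a b) c) (tens (tens a c) b) :=
  @PMor (tens (tens a b) c) (tens (tens a c) b)
    (fun x => ((fst (fst x), snd x), snd (fst x)))
    (fun x e => ((fst (fst e), snd e), snd (fst e))).

Definition duo (p q p' q' : poly)
  : pmor (tens (tri p q) (tri p' q')) (tri (tens p p') (tens q q')) :=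
  @PMor (tens (tri p q) (tri p' q')) (tri (tens p p') (tens q q'))
    (fun X => existT (fun ii : pos (tens p p') => dir (tens p p') ii -> pos (tens q q'))
       (projT1 (fst X), projT1 (snd X))
       (fun dd => (projT2 (fst X) (fst dd), projT2 (snd X) (snd dd))))
    (fun X w => (existT (fun d => dir q (projT2 (fst X) d)) (fst (projT1 w)) (fst (projT2 w)),
                 existT (fun d => dir q' (projT2 (snd X) d)) (snd (projT1 w)) (snd (projT2 w)))).

Definition ev (p q : poly) : pmor (tens (ihom p q) p) q :=
  @PMor (tens (ihom p q) p) q
    (fun x => onpos (fst x) (snd x))
    (fun x e => (existT (fun i => dir q (onpos (fst x) i)) (snd x) e,
                 ondir (fst x) (snd x) e)).

Definition curry {r p q : poly} (m : pmor (tens r p) q) : pmor r (ihom p q) :=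
  @PMor r (ihom p q)
    (fun x => @PMor p q (fun i => onpos m (x, i)) (fun i e => snd (ondir m (x, i) e)))
    (fun x w => fst (ondir m (x, projT1 w) (projT2 w))).

Definition is_monad (t : poly) (eta : pmor yy t) (mu : pmor (tri t t) t) : Prop :=
  pcomp mu (pcomp (tri_map eta (pid t)) (lamI t)) = pid t /\
  pcomp mu (pcomp (tri_map (pid t) eta) (rhoI t)) = pid t /\
  pcomp mu (tri_map mu (pid t)) = pcomp mu (pcomp (tri_map (pid t) mu) (assoc t t t)).

Record comon : Type := Comon {
  carrier : poly ;
  eps : pmor carrier yy ;
  dlt : pmor carrier (tri carrier carrier) }.

Definition is_comonoid (c : comon) : Prop :=
  pcomp (tri_map (eps c) (pid (carrier c))) (dlt c) = lamI (carrier c) /\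
  pcomp (tri_map (pid (carrier c)) (eps c)) (dlt c) = rhoI (carrier c) /\
  pcomp (assoc _ _ _) (pcomp (tri_map (dlt c) (pid (carrier c))) (dlt c))
    = pcomp (tri_map (pid (carrier c)) (dlt c)) (dlt c).

Definition is_cofunctor (c d : comon) (f : pmor (carrier c) (carrier d)) : Prop :=
  pcomp (eps d) f = eps c /\ pcomp (dlt d) f = pcomp (tri_map f f) (dlt c).

Definition yyC : comon := Comon yy (pid yy) (lamI yy).

(* A p-tree is described by its set of labelled vertices: T s i means that
   the vertex reached from the root by the path s (a list of steps
   (label, chosen direction)) exists and is labelled i. *)
Definition step (p : poly) : Type := {i : pos p & dir p i}.

Definition is_ptree (p : poly) (T : list (step p) -> pos p -> Prop) : Prop :=
  (exists i, T nil i) /\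
  (forall s i i', T s i -> T s i' -> i = i') /\
  (forall s i (d : dir p i), T s i -> exists j, T (s ++ [existT _ i d]) j) /\
  (forall s x j, T (s ++ [x]) j -> T s (projT1 x)).

Definition ptree (p : poly) : Type :=
  {T : list (step p) -> pos p -> Prop | is_ptree p T}.

Definition tvertex (p : poly) (T : ptree p) : Type :=
  {s : list (step p) | exists i, proj1_sig T s i}.

Definition cofree (p : poly) : poly := Poly (ptree p) (tvertex p).

Definition ceps (p : poly) : pmor (cofree p) yy :=
  @PMor (cofree p) yy (fun _ => tt)
    (fun T _ => exist _ nil (proj1 (proj2_sig T))).

Lemma subtree_wf (p : poly) (T : ptree p) (s : list (step p)) :
  (exists i, proj1_sig T s i) -> is_ptree p (fun u j => proj1_sig T (s ++ u) j).
Proof.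
  destruct T as [T [Hr [Hf [Hc Hp]]]]; simpl; intros [i0 Hi0].
  split; [|split; [|split]].
  - exists i0. now rewrite app_nil_r.
  - intros u i i'. apply Hf.
  - intros u i d H. destruct (Hc _ _ d H) as [j Hj]. exists j.
    now rewrite app_assoc.
  - intros u x j H. apply (Hp (s ++ u) x j). now rewrite <- app_assoc.
Qed.

Definition subtree (p : poly) (T : ptree p) (a : tvertex p T) : ptree p :=
  exist _ _ (subtree_wf p T (proj1_sig a) (proj2_sig a)).

Definition cdlt (p : poly) : pmor (cofree p) (tri (cofree p) (cofree p)) :=
  @PMor (cofree p) (tri (cofree p) (cofree p))
    (fun T => existT (fun T => tvertex p T -> ptree p) T (subtree p T))
    (fun T w => exist (fun s => exists i, proj1_sig T s i)
                  (proj1_sig (projT1 w) ++ proj1_sig (projT2 w))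
                  (proj2_sig (projT2 w))).

Definition cofreeC (p : poly) : comon := Comon (cofree p) (ceps p) (cdlt p).

Definition rel_step {p q : poly} (phi : pmor p q) (x : step p) (y : step q) : Prop :=
  exists e : dir q (onpos phi (projT1 x)),
    y = existT _ (onpos phi (projT1 x)) e /\ projT2 x = ondir phi (projT1 x) e.

Definition relab_pred {p q : poly} (phi : pmor p q) (T : ptree p)
  : list (step q) -> pos q -> Prop :=
  fun s' j' => exists s j, proj1_sig T s j /\ Forall2 (rel_step phi) s s'
                           /\ j' = onpos phi j.

Lemma relab_addr_uniq {p q : poly} (phi : pmor p q) (T : ptree p) :
  forall s' s1 s2 j1 j2, proj1_sig T s1 j1 -> proj1_sig T s2 j2 ->
  Forall2 (rel_step phi) s1 s' -> Forall2 (rel_step phi) s2 s' -> s1 = s2.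
Proof.
  destruct T as [T [Hr [Hf [Hc Hp]]]]; simpl.
  induction s' as [|y s' IH] using rev_ind.
  - intros s1 s2 j1 j2 _ _ H1 H2. inversion H1. inversion H2. reflexivity.
  - intros s1 s2 j1 j2 T1 T2 H1 H2.
    apply Forall2_app_inv_r in H1 as [l1 [l1' [F1 [F1' ->]]]].
    apply Forall2_app_inv_r in H2 as [l2 [l2' [F2 [F2' ->]]]].
    inversion F1' as [|x1 y1 m1 m1' R1 N1]; subst. inversion N1; subst.
    inversion F2' as [|x2 y2 m2 m2' R2 N2]; subst. inversion N2; subst.
    pose proof (Hp _ _ _ T1) as P1. pose proof (Hp _ _ _ T2) as P2.
    assert (l1 = l2) by (eapply IH; eauto). subst l2.
    pose proof (Hf _ _ _ P1 P2) as Ei.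
    destruct x1 as [i1 d1], x2 as [i2 d2]; simpl in *. subst i2.
    destruct R1 as [e1 [Ey1 Ed1]], R2 as [e2 [Ey2 Ed2]]. simpl in *.
    rewrite Ey1 in Ey2. apply inj_pair2 in Ey2. subst. reflexivity.
Qed.

Lemma relab_wf {p q : poly} (phi : pmor p q) (T : ptree p) :
  is_ptree q (relab_pred phi T).
Proof.
  pose proof (relab_addr_uniq phi T) as U.
  destruct T as [T [Hr [Hf [Hc Hp]]]]; simpl in *; unfold relab_pred; simpl.
  split; [|split; [|split]].
  - destruct Hr as [i Hi]. exists (onpos phi i), nil, i. auto.
  - intros s' i i' [s1 [j1 [T1 [F1 ->]]]] [s2 [j2 [T2 [F2 ->]]]].
    assert (s1 = s2) by (eapply U; eauto). subst.
    f_equal. eapply Hf; eauto.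
  - intros s' i d [s [j [HT [HF ->]]]].
    destruct (Hc s j (ondir phi j d) HT) as [k Hk].
    exists (onpos phi k), (s ++ [existT _ j (ondir phi j d)]), k.
    split; [exact Hk|split; [|reflexivity]].
    apply Forall2_app; [exact HF|]. constructor; [|constructor].
    exists d. split; reflexivity.
  - intros s' y k [s [j [HT [HF Hk]]]].
    apply Forall2_app_inv_r in HF as [l1 [l2 [F1 [F2 ->]]]].
    inversion F2 as [|x y0 m m' R N]; subst. inversion N; subst.
    exists l1, (projT1 x). split; [eapply Hp; eauto|split; [exact F1|]].
    destruct R as [e [-> _]]. reflexivity.
Qed.

Lemma relab_back {p q : poly} (phi : pmor p q) (T : ptree p) (s' : list (step q)) :
  (exists j', relab_pred phi T s' j') ->
  exists s, (exists i, proj1_sig T s i) /\ Forall2 (rel_step phi) s s'.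
Proof.
  intros [j' [s [j [HT [HF _]]]]]. exists s. split; [exists j|]; assumption.
Qed.

Definition cmap {p q : poly} (phi : pmor p q) : pmor (cofree p) (cofree q) :=
  @PMor (cofree p) (cofree q)
    (fun T => exist _ (relab_pred phi T) (relab_wf phi T))
    (fun T a =>
       let w := constructive_indefinite_description _
                  (relab_back phi T (proj1_sig a) (proj2_sig a)) in
       exist (fun s => exists i, proj1_sig T s i) (proj1_sig w) (proj1 (proj2_sig w))).

Definition st1 {p q : poly} (x : step (tens p q)) : step p :=
  existT _ (fst (projT1 x)) (fst (projT2 x)).
Definition st2 {p q : poly} (x : step (tens p q)) : step q :=
  existT _ (snd (projT1 x)) (snd (projT2 x)).

Definition zip_pred {p q : poly} (T : ptree p) (U : ptree q)
  : list (step (tens p q)) -> pos (tens p q) -> Prop :=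
  fun s ij => proj1_sig T (map st1 s) (fst ij) /\ proj1_sig U (map st2 s) (snd ij).

Lemma zip_wf {p q : poly} (T : ptree p) (U : ptree q) : is_ptree (tens p q) (zip_pred T U).
Proof.
  destruct T as [T [Hr [Hf [Hc Hp]]]], U as [U [Hr' [Hf' [Hc' Hp']]]].
  unfold zip_pred; simpl. split; [|split; [|split]].
  - destruct Hr as [i Hi], Hr' as [j Hj]. exists (i, j). simpl. auto.
  - intros s [i j] [i' j'] [H1 H2] [H3 H4]; simpl in *.
    f_equal; [eapply Hf|eapply Hf']; eauto.
  - intros s [i j] [d e] [H1 H2]; simpl in *.
    destruct (Hc _ _ d H1) as [k Hk], (Hc' _ _ e H2) as [k' Hk'].
    exists (k, k'). rewrite !map_app. simpl. auto.
  - intros s x [i j] [H1 H2]; simpl in *. rewrite map_app in H1, H2.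
    split; [apply (Hp _ _ _ H1)|apply (Hp' _ _ _ H2)].
Qed.

Lemma zip_v1 {p q : poly} (T : ptree p) (U : ptree q) (s : list (step (tens p q))) :
  (exists ij, zip_pred T U s ij) -> exists i, proj1_sig T (map st1 s) i.
Proof. intros [ij [H _]]. eauto. Qed.
Lemma zip_v2 {p q : poly} (T : ptree p) (U : ptree q) (s : list (step (tens p q))) :
  (exists ij, zip_pred T U s ij) -> exists j, proj1_sig U (map st2 s) j.
Proof. intros [ij [_ H]]. eauto. Qed.

Definition lax (p q : poly) : pmor (tens (cofree p) (cofree q)) (cofree (tens p q)) :=
  @PMor (tens (cofree p) (cofree q)) (cofree (tens p q))
    (fun TU => exist _ (zip_pred (fst TU) (snd TU)) (zip_wf (fst TU) (snd TU)))
    (fun TU a =>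
       (exist (fun s => exists i, proj1_sig (fst TU) s i) (map st1 (proj1_sig a))
              (zip_v1 (fst TU) (snd TU) _ (proj2_sig a)),
        exist (fun s => exists i, proj1_sig (snd TU) s i) (map st2 (proj1_sig a))
              (zip_v2 (fst TU) (snd TU) _ (proj2_sig a)))).

Definition h (t : poly) (A B : Type) : poly := ihom (lin A) (tri t (lin B)).

(* Poly-enriched composition h_{A,B} (x) h_{B,C} -> h_{A,C}, the curry of
   (h_AB (x) h_BC) (x) Ay -> (h_AB (x) Ay) (x) h_BC
     -> (t <| By) (x) (y <| h_BC)                 [evaluation, unitor]
     -> (t (x) y) <| (By (x) h_BC)                [duoidal map]
     -> t <| (By (x) h_BC) -> t <| (t <| Cy)      [unitor, evaluation]
     -> (t <| t) <| Cy -> t <| Cy                 [associator, mu]      *)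
Definition hcomp (t : poly) (mu : pmor (tri t t) t) (A B C : Type)
  : pmor (tens (h t A B) (h t B C)) (h t A C) :=
  curry
   (pcomp (tri_map mu (pid (lin C)))
   (pcomp (assocI t t (lin C))
   (pcomp (tri_map (pid t) (pcomp (ev (lin B) (tri t (lin C))) (tsym (lin B) (h t B C))))
   (pcomp (tri_map (runit t) (pid (tens (lin B) (h t B C))))
   (pcomp (duo t (lin B) yy (h t B C))
   (pcomp (tens_map (ev (lin A) (tri t (lin B))) (lamI (h t B C)))
          (rearr (h t A B) (h t B C) (lin A)))))))).

Definition dcomp (t : poly) (mu : pmor (tri t t) t) (A B C : Type)
  : pmor (tens (cofree (h t A B)) (cofree (h t B C))) (cofree (h t A C)) :=
  pcomp (cmap (hcomp t mu A B C)) (lax (h t A B) (h t B C)).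

(* Main.v *)
Require Import Defs.
From Stdlib Require Import List ProofIrrelevance FunctionalExtensionality
  ClassicalEpsilon Eqdep PropExtensionality.
Import ListNotations.


Lemma pmor_eq_het {p q} (F G : pmor p q) : F = G ->
  forall i (w1 : dir q (onpos F i)) (w2 : dir q (onpos G i)),
  existT (dir q) _ w1 = existT (dir q) _ w2 -> ondir F i w1 = ondir G i w2.
Proof. intros E; destruct E; intros i w1 w2 H. apply inj_pair2 in H. subst; reflexivity. Qed.

Lemma pmor_ext_het {p q} (F G : pmor p q) (Hpos : forall i, onpos F i = onpos G i)
  (Hdir : forall i (w1 : dir q (onpos F i)) (w2 : dir q (onpos G i)),
     existT (dir q) _ w1 = existT (dir q) _ w2 -> ondir F i w1 = ondir G i w2) : F = G.
Proof.
  destruct F as [f fd], G as [g gd]; simpl in *.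
  assert (f = g) by (apply functional_extensionality; exact Hpos). subst g.
  f_equal. apply functional_extensionality_dep; intro i.
  apply functional_extensionality; intro d. apply Hdir. reflexivity.
Qed.

Lemma pos_eq_het {Z} (P : Z -> Type) (z1 z2 : Z) (E : z1 = z2) (w : P z1) :
  existT P z1 w = existT P z2 (eq_rect z1 P w z2 E).
Proof. destruct E; reflexivity. Qed.

Lemma het_cast {Z} (P : Z -> Type) (z1 z2 : Z) (E : z2 = z1) (w1 : P z1) (w2 : P z2) :
  existT P z1 w1 = existT P z2 w2 -> w1 = eq_rect z2 P w2 z1 E.
Proof. destruct E. intro H. apply inj_pair2 in H. exact H. Qed.

Lemma ptree_eq {p} (T U : ptree p) : (forall s i, proj1_sig T s i <-> proj1_sig U s i) -> T = U.
Proof. destruct T as [T HT], U as [U HU]; simpl; intro H.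
  assert (T = U) by (apply functional_extensionality; intro s; apply functional_extensionality;
     intro i; apply propositional_extensionality; apply H).
  subst U. f_equal. apply proof_irrelevance. Qed.

Lemma tvertex_eq {p} (T : ptree p) (a b : tvertex p T) : proj1_sig a = proj1_sig b -> a = b.
Proof. destruct a, b; simpl; intro; subst; f_equal; apply proof_irrelevance. Qed.

Lemma tv_het {p} (T U : ptree p) (a : tvertex p T) (b : tvertex p U) :
  existT (dir (cofree p)) T a = existT (dir (cofree p)) U b -> proj1_sig a = proj1_sig b.
Proof. intro H. exact (f_equal (fun z : sigT (tvertex p) => proj1_sig (projT2 z)) H). Qed.

Lemma tv_het_mk {p} (T U : ptree p) (a : tvertex p T) (b : tvertex p U) :
  T = U -> proj1_sig a = proj1_sig b -> existT (dir (cofree p)) T a = existT (dir (cofree p)) U b.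
Proof. intros E H; subst U. f_equal. apply tvertex_eq. exact H. Qed.

Lemma tri_het1 {p} (z1 z2 : pos (tri (cofree p) (cofree p)))
  (w1 : dir (tri (cofree p) (cofree p)) z1) (w2 : dir (tri (cofree p) (cofree p)) z2) :
  existT _ z1 w1 = existT _ z2 w2 ->
  proj1_sig (projT1 w1) = proj1_sig (projT1 w2) /\ proj1_sig (projT2 w1) = proj1_sig (projT2 w2).
Proof. intro H. assert (z1 = z2) by exact (f_equal (@projT1 _ _) H). subst z2.
  apply inj_pair2 in H. subst. auto. Qed.

Definition rootl {p} (T : ptree p) : pos p :=
  proj1_sig (constructive_indefinite_description _ (proj1 (proj2_sig T))).
Lemma rootl_spec {p} (T : ptree p) : proj1_sig T nil (rootl T).
Proof. unfold rootl. exact (proj2_sig (constructive_indefinite_description _ _)). Qed.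
Lemma root_child {p} (T : ptree p) (d : dir p (rootl T)) :
  exists j, proj1_sig T [existT _ (rootl T) d] j.
Proof. destruct (proj1 (proj2 (proj2 (proj2_sig T))) nil (rootl T) d (rootl_spec T)) as [j Hj].
  exists j. exact Hj. Qed.
Definition rt (p : poly) : pmor (cofree p) p :=
  @PMor (cofree p) p rootl (fun T d => exist _ [existT _ (rootl T) d] (root_child T d)).

Lemma pt_fun {p} (T : ptree p) s i i' : proj1_sig T s i -> proj1_sig T s i' -> i = i'.
Proof. destruct T as [T [H0 [H H1]]]; apply H. Qed.
Lemma pt_prefix {p} (T : ptree p) s u j : proj1_sig T (s ++ u) j -> exists i, proj1_sig T s i.
Proof. destruct T as [T [H0 [H1 [H2 Hp]]]]; simpl. revert j.
  induction u as [|x u IH] using rev_ind; intros j H.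
  - rewrite app_nil_r in H; eauto.
  - rewrite app_assoc in H. apply Hp in H. eapply IH; eauto. Qed.
Lemma pt_root {p} (T : ptree p) i : proj1_sig T nil i -> i = rootl T.
Proof. intro H. eapply pt_fun; [exact H|apply rootl_spec]. Qed.

Definition ncomon (X : Type) (D : X -> Type) (idm : forall x, D x) (cod : forall x, D x -> X)
  (comp : forall x (d : D x), D (cod x d) -> D x) : comon :=
  Comon (Poly X D) (@PMor (Poly X D) yy (fun _ => tt) (fun x _ => idm x))
    (@PMor (Poly X D) (tri (Poly X D) (Poly X D))
       (fun x => existT (fun y : X => D y -> X) x (cod x))
       (fun x w => comp x (projT1 w) (projT2 w))).

Lemma normalize (v : comon) : is_comonoid v ->
  exists X D idm cod comp, v = ncomon X D idm cod comp.
Proof.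
  destruct v as [[X D] [ep ed] [dp dd]]. intros [H1 [H2 H3]].
  assert (Hs : forall x, projT1 (dp x) = x).
  { intro x. apply (f_equal (fun M : pmor (Poly X D) (tri (Poly X D) yy) => projT1 (onpos M x))) in H2. simpl in H2. exact H2. }
  set (cod := fun x => eq_rect (projT1 (dp x)) (fun y => D y -> X) (projT2 (dp x)) x (Hs x)).
  assert (Hdp : forall x, dp x = existT (fun y => D y -> X) x (cod x)).
  { intro x. unfold cod. generalize (Hs x). destruct (dp x) as [y c]. simpl. intro e.
    destruct e. reflexivity. }
  exists X, D, (fun x => ed x tt), cod.
  exists (fun x d e => dd x (eq_rect _ (dir (tri (Poly X D) (Poly X D))) (existT _ d e) _ (eq_sym (Hdp x)))).
  unfold ncomon. f_equal.
  - assert (ep = fun _ => tt) by (apply functional_extensionality; intro x; destruct (ep x); reflexivity).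
    subst ep. f_equal. apply functional_extensionality_dep; intro x.
    apply functional_extensionality; intro u; destruct u; reflexivity.
  - apply pmor_ext_het; [exact Hdp|]. intros x w1 w2 E. simpl.
    f_equal. simpl in w1, w2.
    replace (existT _ (projT1 w2) (projT2 w2)) with w2 by (destruct w2; reflexivity).
    apply het_cast. exact E.
Qed.


Lemma nL1 X D idm cod comp : is_comonoid (ncomon X D idm cod comp) ->
  forall x, cod x (idm x) = x.
Proof. intros [H1 _] x.
  apply (f_equal (fun M : pmor (Poly X D) (tri yy (Poly X D)) => onpos M x)) in H1.
  simpl in H1. apply inj_pair2 in H1. exact (f_equal (fun f => f tt) H1). Qed.

Lemma nLU X D idm cod comp : is_comonoid (ncomon X D idm cod comp) ->
  forall x (m : D (cod x (idm x))) (m' : D x), existT D _ m = existT D _ m' ->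
  comp x (idm x) m = m'.
Proof. intros Hc x m m' H. pose proof (nL1 _ _ _ _ _ Hc x) as L1. destruct Hc as [H1 _].
  refine (pmor_eq_het _ _ H1 x (existT _ tt m) (existT _ tt m') _).
  simpl. generalize m H. generalize (cod x (idm x)) as a. intros a m0 H0.
  assert (a = x) by exact (f_equal (@projT1 _ _) H0). subst a.
  apply inj_pair2 in H0. subst. reflexivity. Qed.

Lemma nRU X D idm cod comp : is_comonoid (ncomon X D idm cod comp) ->
  forall x d, comp x d (idm (cod x d)) = d.
Proof. intros [_ [H2 _]] x d.
  exact (pmor_eq_het _ _ H2 x (existT _ d tt) (existT _ d tt) eq_refl). Qed.

Lemma nL2 X D idm cod comp : is_comonoid (ncomon X D idm cod comp) ->
  forall x d e, cod x (comp x d e) = cod (cod x d) e.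
Proof. intros [_ [_ H3]] x d e.
  apply (f_equal (fun M : pmor (Poly X D) (tri (Poly X D) (tri (Poly X D) (Poly X D))) => onpos M x)) in H3.
  simpl in H3. apply inj_pair2 in H3.
  apply (f_equal (fun f => f d)) in H3. apply inj_pair2 in H3.
  exact (f_equal (fun f => f e) H3). Qed.

Lemma nAS_help X (D : X -> Type) x (c : D x -> X) (K K' : forall d : D x, D (c d) -> X)
  (HK : forall d e, K d e = K' d e) d e (f1 : D (K d e)) (f2 : D (K' d e)) :
  existT D _ f1 = existT D _ f2 ->
  existT (fun x0 : {i : X & D i -> {i0 : X & D i0 -> X}} =>
     {d0 : D (projT1 x0) &
     {d1 : D (projT1 (projT2 x0 d0)) & D (projT2 (projT2 x0 d0) d1)}})
    (existT (fun i : X => D i -> {i0 : X & D i0 -> X}) x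
       (fun d0 : D x => existT (fun j : X => D j -> X) (c d0) (K d0)))
    (existT _ d (existT _ e f1)) =
  existT
    (fun x0 : {i : X & D i -> {i0 : X & D i0 -> X}} =>
     {d0 : D (projT1 x0) &
     {d1 : D (projT1 (projT2 x0 d0)) & D (projT2 (projT2 x0 d0) d1)}})
    (existT (fun i : X => D i -> {i0 : X & D i0 -> X}) x
       (fun d0 : D x => existT (fun j : X => D j -> X) (c d0) (K' d0)))
    (existT _ d (existT _ e f2)).
Proof. intro H. assert (K = K') by (apply functional_extensionality_dep; intro;
  apply functional_extensionality; intro; apply HK). subst K'.
  apply inj_pair2 in H. subst. reflexivity. Qed.

Lemma nAS X D idm cod comp : is_comonoid (ncomon X D idm cod comp) ->
  forall x d e (f1 : D (cod x (comp x d e))) (f2 : D (cod (cod x d) e)),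
  existT D _ f1 = existT D _ f2 ->
  comp x (comp x d e) f1 = comp x d (comp (cod x d) e f2).
Proof. intros Hc x d e f1 f2 H. pose proof (nL2 _ _ _ _ _ Hc x) as L2. destruct Hc as [_ [_ H3]].
  refine (pmor_eq_het _ _ H3 x (existT _ d (existT _ e f1)) (existT _ d (existT _ e f2)) _).
  exact (nAS_help X D x (cod x) (fun d e => cod x (comp x d e)) (fun d e => cod (cod x d) e) L2 d e f1 f2 H).
Qed.


Inductive U {p : poly} {X : Type} {D : X -> Type} (cod : forall x, D x -> X)
  (phi : pmor (Poly X D) p) : X -> list (step p) -> pos p -> Prop :=
| U0 x : U cod phi x nil (onpos phi x)
| U1 x d s j : U cod phi (cod x (ondir phi x d)) s j ->
     U cod phi x (existT _ (onpos phi x) d :: s) j.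

Lemma U_cons_inv {p X D} cod (phi : pmor (Poly X D) p) x st s j :
  U cod phi x (st :: s) j -> exists d, st = existT _ (onpos phi x) d /\
     U cod phi (cod x (ondir phi x d)) s j.
Proof. intro H. inversion H; subst. eauto. Qed.

Lemma U_nil_inv {p X D} cod (phi : pmor (Poly X D) p) x j :
  U cod phi x nil j -> j = onpos phi x.
Proof. intro H. inversion H; subst. reflexivity. Qed.

Lemma U_wf {p X D} cod (phi : pmor (Poly X D) p) x : is_ptree p (U cod phi x).
Proof.
  split; [|split; [|split]].
  - exists (onpos phi x). constructor.
  - intros s i i' H. revert i'. induction H; intros i' H'.
    + inversion H'; subst; reflexivity.
    + apply U_cons_inv in H' as [d' [E H']]. apply inj_pair2 in E. subst d'. auto.
  - intros s i d H. revert d. induction H; intro d0.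
    + exists (onpos phi (cod x (ondir phi x d0))). simpl. apply (U1 cod phi x d0). constructor.
    + destruct (IHU d0) as [j' Hj]. exists j'. simpl. constructor. exact Hj.
  - intros s. revert x. induction s as [|st s IH]; intros x y j H.
    + simpl in H. apply U_cons_inv in H as [d [E _]]. subst y. simpl. constructor.
    + simpl in H. apply U_cons_inv in H as [d [E H]]. subst st. constructor. eapply IH. exact H.
Qed.

Fixpoint mor {p X D} (idm : forall x : X, D x) (cod : forall x, D x -> X)
  (comp : forall x (d : D x), D (cod x d) -> D x) (phi : pmor (Poly X D) p)
  (s : list (step p)) : forall x, D x :=
  match s with
  | nil => fun x => idm x
  | st :: s' => fun x =>
     match excluded_middle_informative (projT1 st = onpos phi x) with
     | left H => comp x (ondir phi x (eq_rect _ (dir p) (projT2 st) _ H))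
                   (mor idm cod comp phi s' (cod x (ondir phi x (eq_rect _ (dir p) (projT2 st) _ H))))
     | right _ => idm x
     end
  end.

Lemma mor_cons {p X D} idm cod comp (phi : pmor (Poly X D) p) x d s :
  mor idm cod comp phi (@cons (step p) (existT _ (onpos phi x) d) s) x =
  comp x (ondir phi x d) (mor idm cod comp phi s (cod x (ondir phi x d))).
Proof. simpl. destruct excluded_middle_informative as [H|H]; [|congruence].
  rewrite (proof_irrelevance _ H eq_refl). reflexivity. Qed.

Definition unf {p X D} idm cod comp (phi : pmor (Poly X D) p) : pmor (Poly X D) (cofree p) :=
  @PMor (Poly X D) (cofree p) (fun x => exist _ (U cod phi x) (U_wf cod phi x))
    (fun x a => mor idm cod comp phi (proj1_sig a) x).

Lemma mor_het {p X D} idm cod comp (phi : pmor (Poly X D) p) s x y :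
  x = y -> existT D x (mor idm cod comp phi s x) = existT D y (mor idm cod comp phi s y).
Proof. intro; subst; reflexivity. Qed.

Lemma U_sub {p X D} idm cod comp (phi : pmor (Poly X D) p) :
  is_comonoid (ncomon X D idm cod comp) ->
  forall s x i, U cod phi x s i -> forall u j,
  U cod phi x (s ++ u) j <-> U cod phi (cod x (mor idm cod comp phi s x)) u j.
Proof. intros Hc s. induction s as [|st s IH]; intros x i H u j.
  - simpl. rewrite (nL1 _ _ _ _ _ Hc). tauto.
  - apply U_cons_inv in H as [d [E H]]. subst st. rewrite mor_cons.
    rewrite (nL2 _ _ _ _ _ Hc). rewrite <- (IH _ _ H). simpl. split; intro H'.
    + apply U_cons_inv in H' as [d' [E H']]. apply inj_pair2 in E. subst. exact H'.
    + constructor. exact H'.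
Qed.

Lemma mor_app {p X D} idm cod comp (phi : pmor (Poly X D) p) :
  is_comonoid (ncomon X D idm cod comp) ->
  forall a x i, U cod phi x a i -> forall b,
  mor idm cod comp phi (a ++ b) x =
  comp x (mor idm cod comp phi a x) (mor idm cod comp phi b (cod x (mor idm cod comp phi a x))).
Proof. intros Hc a. induction a as [|st a IH]; intros x i H b.
  - simpl. symmetry. apply (nLU _ _ _ _ _ Hc). apply mor_het. apply (nL1 _ _ _ _ _ Hc).
  - apply U_cons_inv in H as [d [E H]]. subst st. simpl (_ ++ _). rewrite !mor_cons.
    rewrite (IH _ _ H). symmetry. apply (nAS _ _ _ _ _ Hc). apply mor_het.
    apply (nL2 _ _ _ _ _ Hc).
Qed.

Lemma unf_cof {p X D} idm cod comp (phi : pmor (Poly X D) p) :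
  is_comonoid (ncomon X D idm cod comp) ->
  is_cofunctor (ncomon X D idm cod comp) (cofreeC p) (unf idm cod comp phi).
Proof. intros Hc. split.
  - reflexivity.
  - apply pmor_ext_het.
    + intro x. simpl. f_equal. apply functional_extensionality. intro a.
      apply ptree_eq. intros u j. simpl. destruct a as [s [i Hi]]. simpl in *.
      exact (U_sub idm cod comp phi Hc s x i Hi u j).
    + intros x w1 w2 E. apply tri_het1 in E as [E1 E2]. simpl.
      destruct w1 as [[a [i Hi]] [b Hb]], w2 as [[a2 Ha2] [b2 Hb2]]. simpl in *. subst a2 b2.
      exact (mor_app idm cod comp phi Hc a x i Hi _).
Qed.


Lemma rt_unf {p X D} idm cod comp (phi : pmor (Poly X D) p) :
  is_comonoid (ncomon X D idm cod comp) ->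
  pcomp (rt p) (unf idm cod comp phi) = phi.
Proof. intro Hc. apply pmor_ext_het.
  - intro x. simpl. symmetry. apply pt_root. simpl. constructor.
  - intros x w1 w2 E.
    assert (H : ondir (pcomp (rt p) (unf idm cod comp phi)) x w1 =
      mor idm cod comp phi (@cons (step p) (existT (dir p) _ w1) nil) x) by reflexivity.
    rewrite H, E. rewrite mor_cons. simpl. apply (nRU _ _ _ _ _ Hc).
Qed.

Lemma pt_parent {p} (T : ptree p) s x j : proj1_sig T (s ++ [x]) j -> proj1_sig T s (projT1 x).
Proof. destruct T as [T [H0 [H1 [H2 Hp]]]]; apply Hp. Qed.

Lemma het_tri_sub {p} (T : ptree p) (S1 S2 : tvertex p T -> ptree p) (a : tvertex p T)
  (b1 : tvertex p (S1 a)) (b2 : tvertex p (S2 a)) :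
  S1 = S2 -> proj1_sig b1 = proj1_sig b2 ->
  existT (dir (tri (cofree p) (cofree p))) (existT (fun T => tvertex p T -> ptree p) T S1) (existT _ a b1) =
  existT (dir (tri (cofree p) (cofree p))) (existT (fun T => tvertex p T -> ptree p) T S2) (existT _ a b2).
Proof. intros E H. subst S2. f_equal. f_equal. apply tvertex_eq. exact H. Qed.

Lemma cof_unique {p X D} idm cod comp (F : pmor (Poly X D) (cofree p)) :
  is_comonoid (ncomon X D idm cod comp) ->
  is_cofunctor (ncomon X D idm cod comp) (cofreeC p) F ->
  F = unf idm cod comp (pcomp (rt p) F).
Proof. intros Hc [He Hd].
  assert (S : forall x (a : tvertex p (onpos F x)), subtree p (onpos F x) a = onpos F (cod x (ondir F x a))).
  { intros x a. pose proof (f_equal (fun M : pmor (Poly X D) (tri (cofree p) (cofree p)) => onpos M x) Hd) as H.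
    simpl in H. apply inj_pair2 in H. exact (f_equal (fun f => f a) H). }
  assert (Dd : forall x (a : tvertex p (onpos F x)) (b : tvertex p (subtree p (onpos F x) a))
     (b' : tvertex p (onpos F (cod x (ondir F x a)))), proj1_sig b = proj1_sig b' ->
     ondir F x (exist _ (proj1_sig a ++ proj1_sig b) (proj2_sig b)) =
     comp x (ondir F x a) (ondir F _ b')).
  { intros x a b b' Hb.
    refine (pmor_eq_het _ _ Hd x (existT _ a b) (existT _ a b') _).
    apply het_tri_sub; [|exact Hb]. apply functional_extensionality. exact (S x). }
  set (th := pcomp (rt p) F).
  assert (Hfirst : forall x st s j, proj1_sig (onpos F x) (st :: s) j ->
     projT1 st = rootl (onpos F x)).
  { intros x st s j H. change (st :: s) with ([st] ++ s) in H.
    apply pt_prefix in H as [i H]. change [st] with ([] ++ [st]) in H.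
    apply pt_parent in H. eapply pt_fun; [exact H|]. apply rootl_spec. }
  assert (Tr : forall s x j, proj1_sig (onpos F x) s j <-> U cod th x s j).
  { induction s as [|st s IH]; intros x j; split; intro H.
    - apply pt_root in H. subst j. constructor.
    - apply U_nil_inv in H. subst j. apply rootl_spec.
    - pose proof (Hfirst _ _ _ _ H) as Hr. destruct st as [r d]. simpl in Hr. subst r.
      apply (U1 cod th x d). apply IH.
      change (proj1_sig (onpos F (cod x (ondir F x (ondir (rt p) (onpos F x) d)))) s j).
      rewrite <- S. exact H.
    - apply U_cons_inv in H as [d [E H]]. subst st. apply IH in H.
      change (proj1_sig (onpos F (cod x (ondir F x (ondir (rt p) (onpos F x) d)))) s j) in H.
      rewrite <- S in H. exact H. }
  assert (Dr : forall s x (a : tvertex p (onpos F x)), proj1_sig a = s ->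
     ondir F x a = mor idm cod comp th s x).
  { induction s as [|st s IH]; intros x a Ha.
    - simpl. pose proof (pmor_eq_het _ _ He x tt tt eq_refl) as H. simpl in H.
      rewrite <- H. f_equal. apply tvertex_eq. simpl. exact Ha.
    - destruct a as [l [j Hj]]. simpl in Ha. subst l.
      pose proof (Hfirst _ _ _ _ Hj) as Hr. destruct st as [r d]. simpl in Hr. subst r.
      etransitivity; [|symmetry; exact (mor_cons idm cod comp th x d s)].
      set (a1 := ondir (rt p) (onpos F x) d).
      assert (Hb : exists i, proj1_sig (subtree p (onpos F x) a1) s i) by (exists j; exact Hj).
      assert (Hb' : exists i, proj1_sig (onpos F (cod x (ondir F x a1))) s i)
        by (rewrite <- S; exact Hb).
      pose proof (Dd x a1 (exist _ s Hb) (exist _ s Hb') eq_refl) as E.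
      rewrite (IH _ (exist _ s Hb') eq_refl) in E. simpl in E.
      etransitivity; [|exact E]. f_equal. apply tvertex_eq. reflexivity. }
  apply pmor_ext_het.
  - intro x. apply ptree_eq. intros s j. simpl. apply Tr.
  - intros x w1 w2 E. apply tv_het in E. simpl. apply Dr. exact E.
Qed.


Lemma back_spec {p q} (phi : pmor p q) (T : ptree p) (a : tvertex q (onpos (cmap phi) T)) :
  (exists i, proj1_sig T (proj1_sig (ondir (cmap phi) T a)) i) /\
  Forall2 (rel_step phi) (proj1_sig (ondir (cmap phi) T a)) (proj1_sig a).
Proof. simpl. destruct (constructive_indefinite_description _ _) as [w [H1 H2]]. simpl. auto. Qed.

Lemma relab_uniq {p q} (phi : pmor p q) (T : ptree p) s' s1 s2 :
  (exists i, proj1_sig T s1 i) -> (exists i, proj1_sig T s2 i) ->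
  Forall2 (rel_step phi) s1 s' -> Forall2 (rel_step phi) s2 s' -> s1 = s2.
Proof. intros [i1 H1] [i2 H2]. eapply relab_addr_uniq; eauto. Qed.

Lemma relab_sub {p q} (phi : pmor p q) (T : ptree p) b a :
  (exists i, proj1_sig T b i) -> Forall2 (rel_step phi) b a ->
  forall u j, relab_pred phi T (a ++ u) j <->
    (exists s j0, proj1_sig T (b ++ s) j0 /\ Forall2 (rel_step phi) s u /\ j = onpos phi j0).
Proof. intros Hb Fb u j. split.
  - intros [s [j0 [HT [HF Hj]]]].
    apply Forall2_app_inv_r in HF as [l1 [l2 [F1 [F2 ->]]]].
    assert (l1 = b) by (eapply (relab_uniq phi T a); eauto; eapply pt_prefix; eauto).
    subst l1. exists l2, j0. auto.
  - intros [s [j0 [HT [HF Hj]]]]. exists (b ++ s), j0. split; [exact HT|split; [|exact Hj]].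
    apply Forall2_app; assumption.
Qed.

Lemma F2nil {A B} (R : A -> B -> Prop) l : Forall2 R l [] -> l = [].
Proof. intro H; inversion H; reflexivity. Qed.

Lemma F2_app_eq {A B} (R : A -> B -> Prop) x a b a' b' :
  Forall2 R x (a ++ b) -> a = a' -> b = b' -> Forall2 R x (a' ++ b').
Proof. intros; subst; assumption. Qed.

Lemma F2_single_eq {A B} (R : A -> B -> Prop) x (a b : B) :
  Forall2 R x [a] -> a = b -> Forall2 R x [b].
Proof. intros; subst; assumption. Qed.

Lemma cmap_cof {p q} (phi : pmor p q) : is_cofunctor (cofreeC p) (cofreeC q) (cmap phi).
Proof. split.
  - apply pmor_ext_het; [reflexivity|]. intros T w1 w2 _. simpl.
    apply tvertex_eq. destruct (back_spec phi T (exist _ nil (proj1 (proj2_sig (onpos (cmap phi) T))))) as [_ F].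
    simpl in F. simpl. exact (F2nil _ _ F).
  - apply pmor_ext_het.
    + intro T. simpl. f_equal. apply functional_extensionality. intro a.
      apply ptree_eq. intros u j. simpl.
      destruct (back_spec phi T a) as [Hb Fb].
      rewrite (relab_sub phi T _ _ Hb Fb u j). unfold relab_pred. simpl. tauto.
    + intros T w1 w2 E. apply tri_het1 in E as [E1 E2]. apply tvertex_eq.
      destruct (back_spec phi T (projT1 w2)) as [Hb Fb].
      destruct (back_spec phi (subtree p T (ondir (cmap phi) T (projT1 w2))) (projT2 w2)) as [Hc Fc].
      destruct (back_spec phi T (exist _ (proj1_sig (projT1 w1) ++ proj1_sig (projT2 w1)) (proj2_sig (projT2 w1)))) as [Hbc Fbc].
      apply (relab_uniq phi T (proj1_sig (projT1 w1) ++ proj1_sig (projT2 w1))).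
      * exact Hbc.
      * exact Hc.
      * exact Fbc.
      * assert (G : Forall2 (rel_step phi)
           (proj1_sig (ondir (cmap phi) T (projT1 w2)) ++
            proj1_sig (ondir (cmap phi) (subtree p T (ondir (cmap phi) T (projT1 w2))) (projT2 w2)))
           (proj1_sig (projT1 w2) ++ proj1_sig (projT2 w2))) by (apply Forall2_app; assumption).
        refine (F2_app_eq _ _ _ _ _ _ G _ _); symmetry; [exact E1|exact E2].
Qed.

Lemma rt_cmap {p q} (phi : pmor p q) : pcomp (rt q) (cmap phi) = pcomp phi (rt p).
Proof. apply pmor_ext_het.
  - intro T. simpl. symmetry. apply pt_root. simpl. exists nil, (rootl T).
    split; [apply rootl_spec|split; [constructor|reflexivity]].
  - intros T w1 w2 E. apply tvertex_eq.
    destruct (back_spec phi T (ondir (rt q) (onpos (cmap phi) T) w1)) as [Hb Fb].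
    simpl (ondir (pcomp _ _) _ _). 
    eapply (relab_uniq phi T [existT _ (onpos phi (rootl T)) w2]).
    + exact Hb.
    + simpl. apply root_child.
    + exact (F2_single_eq _ _ _ _ Fb E).
    + constructor; [|constructor]. exists w2. simpl. split; reflexivity.
Qed.


Definition iota (t : poly) (eta : pmor yy t) {A A'} (sg : A -> A') : pos (h t A A') :=
  @PMor (lin A) (tri t (lin A')) (fun a => existT (fun i => dir t i -> A') (onpos eta tt) (fun _ => sg a))
    (fun a w => tt).

Definition rsg (t : poly) {A A' C} (sg : A -> A') : pmor (h t A' C) (h t A C) :=
  @PMor (h t A' C) (h t A C)
    (fun psi => @PMor (lin A) (tri t (lin C)) (fun a => onpos psi (sg a)) (fun a w => ondir psi (sg a) w))
    (fun psi w => existT _ (sg (projT1 w)) (projT2 w)).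

Lemma pmor_lin_ext {A Q} (f g : pmor (lin A) Q) : (forall a, onpos f a = onpos g a) -> f = g.
Proof. destruct f as [f fd], g as [g gd]; simpl; intro H.
  assert (f = g) by (apply functional_extensionality; exact H). subst g. f_equal.
  apply functional_extensionality_dep; intro a. apply functional_extensionality; intro w.
  destruct (fd a w), (gd a w). reflexivity. Qed.

Lemma ML (t : poly) eta mu : is_monad t eta mu -> forall i,
  onpos mu (existT (fun i0 => dir t i0 -> pos t) (onpos eta tt) (fun _ => i)) = i /\
  forall d, existT (dir t) _ d = existT (dir t) i (projT2 (ondir mu (existT (fun i0 => dir t i0 -> pos t) (onpos eta tt) (fun _ => i)) d)).
Proof. intros [E0 _] i.
  assert (Ei : onpos mu (existT (fun i0 => dir t i0 -> pos t) (onpos eta tt) (fun _ => i)) = i)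
    by exact (f_equal (fun M : pmor t t => onpos M i) E0).
  split; [exact Ei|]. intro d.
  etransitivity; [exact (pos_eq_het (dir t) _ _ Ei d)|]. f_equal. symmetry.
  exact (pmor_eq_het _ _ E0 i d _ (pos_eq_het (dir t) _ _ Ei d)).
Qed.

Lemma Kgen (t : poly) C (m : pos t) (z : {i : pos t & dir t i -> C})
  (g : dir t m -> dir t (projT1 z)) (E : m = projT1 z)
  (Hg : forall d, existT (dir t) m d = existT (dir t) (projT1 z) (g d)) :
  existT (fun i => dir t i -> C) m (fun d => projT2 z (g d)) = z /\
  forall e1 e2, existT (dir (tri t (lin C))) (existT (fun i => dir t i -> C) m (fun d => projT2 z (g d))) e1
     = existT (dir (tri t (lin C))) z e2 -> g (projT1 e1) = projT1 e2.
Proof. destruct z as [i c]; simpl in *. subst m.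
  assert (g = fun d => d) by (apply functional_extensionality; intro d;
     pose proof (Hg d) as H; apply inj_pair2 in H; symmetry; exact H).
  subst g. split; [reflexivity|]. intros e1 e2 H. apply inj_pair2 in H. subst e2. reflexivity.
Qed.

Lemma Khc (t : poly) eta mu A A' C (sg : A -> A') : is_monad t eta mu ->
  forall psi, onpos (hcomp t mu A A' C) (iota t eta sg, psi) = onpos (rsg t (C:=C) sg) psi.
Proof. intros Hm psi. apply pmor_lin_ext. intro a. cbn.
  destruct (ML t eta mu Hm (projT1 (onpos psi (sg a)))) as [E Hg].
  exact (proj1 (Kgen t C _ (onpos psi (sg a)) _ E Hg)).
Qed.

Lemma Khd (t : poly) eta mu A A' C (sg : A -> A') : is_monad t eta mu ->
  forall psi (e1 : dir (h t A C) (onpos (hcomp t mu A A' C) (iota t eta sg, psi)))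
    (e2 : dir (h t A C) (onpos (rsg t (C:=C) sg) psi)),
  existT _ _ e1 = existT _ _ e2 ->
  snd (ondir (hcomp t mu A A' C) (iota t eta sg, psi) e1) = ondir (rsg t sg) psi e2.
Proof. intros Hm psi e1 e2 H.
  assert (Ha : projT1 e1 = projT1 e2) by exact (f_equal (fun z : sigT (dir (h t A C)) => projT1 (projT2 z)) H).
  pose proof (f_equal (fun z : sigT (dir (h t A C)) =>
     existT (dir (tri t (lin C))) (onpos (projT1 z) (projT1 (projT2 z))) (projT2 (projT2 z))) H) as H2.
  simpl in H2. destruct e1 as [a e1], e2 as [a2 e2]. simpl in Ha. subst a2. simpl in H2.
  cbn. f_equal.
  destruct (ML t eta mu Hm (projT1 (onpos psi (sg a)))) as [E Hg].
  pose proof (proj2 (Kgen t C _ (onpos psi (sg a)) _ E Hg) e1 e2 H2) as K.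
  destruct e2 as [d2 u2]. simpl in K. rewrite K.
  change (existT (fun _ : dir t (projT1 (onpos psi (sg a))) => unit) d2 (projT2 e1) =
          existT (fun _ : dir t (projT1 (onpos psi (sg a))) => unit) d2 u2).
  destruct (projT2 e1), u2. reflexivity.
Qed.

Definition ipred (t : poly) eta {A A'} (sg : A -> A') : list (step (h t A A')) -> pos (h t A A') -> Prop :=
  fun s i => i = iota t eta sg /\ Forall (fun x => projT1 x = iota t eta sg) s.

Lemma ipred_wf (t : poly) eta {A A'} (sg : A -> A') : is_ptree (h t A A') (ipred t eta sg).
Proof. unfold ipred. split; [|split; [|split]].
  - exists (iota t eta sg). auto.
  - intros s i i' [-> _] [-> _]. reflexivity.
  - intros s i d [-> H]. exists (iota t eta sg). split; [reflexivity|].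
    apply Forall_app. split; [exact H|]. constructor; [reflexivity|constructor].
  - intros s x j [_ H]. apply Forall_app in H as [H1 H2]. inversion H2; subst. auto.
Qed.

Definition itree (t : poly) eta {A A'} (sg : A -> A') : ptree (h t A A') :=
  exist _ (ipred t eta sg) (ipred_wf t eta sg).

Definition isg (t : poly) eta {A A'} (sg : A -> A') : pmor yy (cofree (h t A A')) :=
  @PMor yy (cofree (h t A A')) (fun _ => itree t eta sg) (fun _ _ => tt).

Lemma isg_cof (t : poly) eta {A A'} (sg : A -> A') :
  is_cofunctor yyC (cofreeC (h t A A')) (isg t eta sg).
Proof. split.
  - apply pmor_ext_het; [intros []; reflexivity|]. intros [] [] [] _. reflexivity.
  - apply pmor_ext_het.
    + intros []. simpl. f_equal. apply functional_extensionality. intros [s [i [Hi Hs]]].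
      apply ptree_eq. intros u j. simpl. unfold ipred. rewrite Forall_app. tauto.
    + intros [] w1 w2 _. reflexivity.
Qed.

Lemma K2 (t : poly) eta mu A A' C (sg : A -> A') : is_monad t eta mu ->
  forall (x : step (tens (h t A A') (h t A' C))) (y : step (h t A C)),
  fst (projT1 x) = iota t eta sg -> rel_step (hcomp t mu A A' C) x y ->
  rel_step (rsg t (C:=C) sg) (st2 x) y.
Proof. intros Hm [[i psi] [d1 d2]] y Hi [e [Ey Ed]]. simpl in Hi. subst i.
  exists (eq_rect _ (dir (h t A C)) e _ (Khc t eta mu A A' C sg Hm psi)). split.
  - rewrite Ey. apply pos_eq_het.
  - apply (f_equal snd) in Ed. simpl in Ed |- *. rewrite Ed.
    apply (Khd t eta mu A A' C sg Hm). apply pos_eq_het.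
Qed.

Lemma K3 (t : poly) eta mu A A' C (sg : A -> A') : is_monad t eta mu ->
  forall (x2 : step (h t A' C)) (y : step (h t A C)),
  rel_step (rsg t (C:=C) sg) x2 y ->
  exists x : step (tens (h t A A') (h t A' C)),
    st2 x = x2 /\ fst (projT1 x) = iota t eta sg /\ rel_step (hcomp t mu A A' C) x y.
Proof. intros Hm [psi d2] y [e2 [Ey Ed]]. simpl in Ed.
  set (E := Khc t eta mu A A' C sg Hm psi).
  set (e1 := eq_rect _ (dir (h t A C)) e2 _ (eq_sym E)).
  assert (H : existT (dir (h t A C)) _ e1 = existT (dir (h t A C)) _ e2).
  { symmetry. apply pos_eq_het. }
  exists (existT (fun ij : pos (tens (h t A A') (h t A' C)) => dir (tens (h t A A') (h t A' C)) ij)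
            (iota t eta sg, psi) (ondir (hcomp t mu A A' C) (iota t eta sg, psi) e1)).
  split; [|split; [reflexivity|]].
  - transitivity (existT (dir (h t A' C)) psi (snd (ondir (hcomp t mu A A' C) (iota t eta sg, psi) e1)));
      [reflexivity|]. rewrite (Khd t eta mu A A' C sg Hm psi e1 e2 H). rewrite Ed. reflexivity.
  - exists e1. split; [|reflexivity]. rewrite Ey. symmetry. exact H.
Qed.

Lemma F2map (t : poly) eta mu A A' C (sg : A -> A') : is_monad t eta mu ->
  forall s s', Forall (fun x => projT1 x = iota t eta sg) (map st1 s) ->
  Forall2 (rel_step (hcomp t mu A A' C)) s s' -> Forall2 (rel_step (rsg t (C:=C) sg)) (map st2 s) s'.
Proof. intros Hm s s' HF H. induction H; simpl; constructor.
  - inversion HF; subst. apply (K2 t eta mu A A' C sg Hm); assumption.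
  - apply IHForall2. inversion HF; assumption.
Qed.

Lemma F2lift (t : poly) eta mu A A' C (sg : A -> A') : is_monad t eta mu ->
  forall s2 s', Forall2 (rel_step (rsg t (C:=C) sg)) s2 s' ->
  exists s, map st2 s = s2 /\ Forall (fun x => projT1 x = iota t eta sg) (map st1 s) /\
    Forall2 (rel_step (hcomp t mu A A' C)) s s'.
Proof. intros Hm s2 s' H. induction H.
  - exists nil. simpl. auto.
  - destruct IHForall2 as [s [E [HF HR]]].
    destruct (K3 t eta mu A A' C sg Hm x y H) as [z [Ez [Hz Rz]]].
    exists (z :: s). simpl. rewrite E, Ez. auto.
Qed.

Lemma Qrel (t : poly) eta mu A A' C (sg : A -> A') : is_monad t eta mu ->
  forall (T : ptree (h t A' C)) s' j',
  relab_pred (hcomp t mu A A' C) (exist _ (zip_pred (itree t eta sg) T) (zip_wf (itree t eta sg) T)) s' j'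
  <-> relab_pred (rsg t sg) T s' j'.
Proof. intros Hm T s' j'. unfold relab_pred. simpl. split.
  - intros [s [j [[[Hj1 Hs1] Hj2] [HF Hj]]]].
    exists (map st2 s), (snd j). split; [exact Hj2|split].
    + apply (F2map t eta mu A A' C sg Hm); assumption.
    + rewrite Hj. destruct j as [j1 j2]. simpl in Hj1. subst j1.
      apply (Khc t eta mu A A' C sg Hm).
  - intros [s2 [j2 [HT [HF Hj]]]].
    destruct (F2lift t eta mu A A' C sg Hm s2 s' HF) as [s [E [Hs HR]]].
    exists s, (iota t eta sg, j2). split; [|split; [exact HR|]].
    + unfold zip_pred. simpl. split; [split; [reflexivity|exact Hs]|]. rewrite E. exact HT.
    + rewrite Hj. symmetry. apply (Khc t eta mu A A' C sg Hm).
Qed.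

Lemma Pcomp (t : poly) eta mu A A' C (sg : A -> A') : is_monad t eta mu ->
  forall V (k : pmor V (cofree (h t A' C))),
  pcomp (dcomp t mu A A' C) (pcomp (tens_map (isg t eta sg) k) (unitL V)) =
  pcomp (cmap (rsg t sg)) k.
Proof. intros Hm V k. apply pmor_ext_het.
  - intro x. apply ptree_eq. intros s j. exact (Qrel t eta mu A A' C sg Hm (onpos k x) s j).
  - intros x w1 w2 E. apply tv_het in E.
    set (z := (itree t eta sg, onpos k x) : pos (tens (cofree (h t A A')) (cofree (h t A' C)))).
    transitivity (ondir k x (snd (ondir (lax (h t A A') (h t A' C)) z
        (ondir (cmap (hcomp t mu A A' C)) (onpos (lax (h t A A') (h t A' C)) z) w1)))); [reflexivity|].
    simpl (ondir (pcomp (cmap _) k) x w2). f_equal. apply tvertex_eq.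
    destruct (back_spec (hcomp t mu A A' C) (onpos (lax (h t A A') (h t A' C)) z) w1) as [[j Hb] Fb].
    destruct (back_spec (rsg t sg) (onpos k x) w2) as [Hb2 Fb2].
    apply (relab_uniq (rsg t sg) (onpos k x) (proj1_sig w2)).
    + destruct Hb as [_ H2]. exists (snd j). exact H2.
    + exact Hb2.
    + rewrite <- E. apply (F2map t eta mu A A' C sg Hm).
      * destruct Hb as [[_ H1] _]. exact H1.
      * exact Fb.
    + exact Fb2.
Qed.


Lemma cof_comp (a b c : comon) F G : is_cofunctor a b F -> is_cofunctor b c G ->
  is_cofunctor a c (pcomp G F).
Proof. intros [F1 F2] [G1 G2]. split.
  - change (pcomp (pcomp (eps c) G) F = eps a). rewrite G1. exact F1.
  - change (pcomp (pcomp (dlt c) G) F = pcomp (tri_map (pcomp G F) (pcomp G F)) (dlt a)).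
    rewrite G2. change (pcomp (tri_map G G) (pcomp (dlt b) F) = pcomp (tri_map (pcomp G F) (pcomp G F)) (dlt a)).
    rewrite F2. reflexivity.
Qed.

Definition merge {V : poly} (t : poly) {A B C} (fa : pmor V (h t A C)) (fb : pmor V (h t B C))
  : pmor V (h t (A + B) C) :=
  @PMor V (h t (A + B) C)
    (fun x => @PMor (lin (A + B)) (tri t (lin C))
       (fun ab => match ab with inl a => onpos (onpos fa x) a | inr b => onpos (onpos fb x) b end)
       (fun ab w => tt))
    (fun x w => match w with
       | existT _ (inl a) e => ondir fa x (existT _ a e)
       | existT _ (inr b) e => ondir fb x (existT _ b e) end).

Lemma merge_l {V : poly} (t : poly) {A B C} (fa : pmor V (h t A C)) (fb : pmor V (h t B C)) :
  pcomp (rsg t (C:=C) (@inl A B)) (merge t fa fb) = fa.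
Proof. apply pmor_ext_het.
  - intro x. apply pmor_lin_ext. intro a. reflexivity.
  - intros x w1 w2 E.
    assert (Ha : projT1 w1 = projT1 w2) by exact (f_equal (fun z : sigT (dir (h t A C)) => projT1 (projT2 z)) E).
    pose proof (f_equal (fun z : sigT (dir (h t A C)) =>
       existT (dir (tri t (lin C))) (onpos (projT1 z) (projT1 (projT2 z))) (projT2 (projT2 z))) E) as E2.
    simpl in E2. destruct w1 as [a e1], w2 as [a2 e2]. simpl in Ha. subst a2. simpl in E2.
    apply inj_pair2 in E2. subst e2. reflexivity.
Qed.

Lemma merge_r {V : poly} (t : poly) {A B C} (fa : pmor V (h t A C)) (fb : pmor V (h t B C)) :
  pcomp (rsg t (C:=C) (@inr A B)) (merge t fa fb) = fb.
Proof. apply pmor_ext_het.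
  - intro x. apply pmor_lin_ext. intro a. reflexivity.
  - intros x w1 w2 E.
    assert (Ha : projT1 w1 = projT1 w2) by exact (f_equal (fun z : sigT (dir (h t B C)) => projT1 (projT2 z)) E).
    pose proof (f_equal (fun z : sigT (dir (h t B C)) =>
       existT (dir (tri t (lin C))) (onpos (projT1 z) (projT1 (projT2 z))) (projT2 (projT2 z))) E) as E2.
    simpl in E2. destruct w1 as [a e1], w2 as [a2 e2]. simpl in Ha. subst a2. simpl in E2.
    apply inj_pair2 in E2. subst e2. reflexivity.
Qed.

Lemma joint_inj {V : poly} (t : poly) {A B C} (th1 th2 : pmor V (h t (A + B) C)) :
  pcomp (rsg t (C:=C) (@inl A B)) th1 = pcomp (rsg t (@inl A B)) th2 ->
  pcomp (rsg t (C:=C) (@inr A B)) th1 = pcomp (rsg t (@inr A B)) th2 -> th1 = th2.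
Proof. intros HA HB.
  assert (Hp : forall x, onpos th1 x = onpos th2 x).
  { intro x. apply pmor_lin_ext. intros [a|b].
    - exact (f_equal (fun M : pmor V (h t A C) => onpos (onpos M x) a) HA).
    - exact (f_equal (fun M : pmor V (h t B C) => onpos (onpos M x) b) HB). }
  destruct th1 as [o1 d1], th2 as [o2 d2]. simpl in Hp.
  assert (o1 = o2) by (apply functional_extensionality; exact Hp). subst o2.
  f_equal. apply functional_extensionality_dep; intro x. apply functional_extensionality; intros [[a|b] e].
  - exact (pmor_eq_het _ _ HA x (existT _ a e) (existT _ a e) eq_refl).
  - exact (pmor_eq_het _ _ HB x (existT _ b e) (existT _ b e) eq_refl).
Qed.



Theorem mainTheorem3 (t : poly) (eta : pmor yy t) (mu : pmor (tri t t) t) :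
  is_monad t eta mu ->
  forall A B : Type,
  exists (i : pmor yy (cofree (h t A (A + B))))
         (j : pmor yy (cofree (h t B (A + B)))),
    is_cofunctor yyC (cofreeC (h t A (A + B))) i /\
    is_cofunctor yyC (cofreeC (h t B (A + B))) j /\
    forall (C : Type) (v : comon), is_comonoid v ->
    forall (f : pmor (carrier v) (cofree (h t A C)))
           (g : pmor (carrier v) (cofree (h t B C))),
      is_cofunctor v (cofreeC (h t A C)) f ->
      is_cofunctor v (cofreeC (h t B C)) g ->
      exists k : pmor (carrier v) (cofree (h t (A + B) C)),
        (is_cofunctor v (cofreeC (h t (A + B) C)) k /\
         pcomp (dcomp t mu A (A + B) C) (pcomp (tens_map i k) (unitL (carrier v))) = f /\
         pcomp (dcomp t mu B (A + B) C) (pcomp (tens_map j k) (unitL (carrier v))) = g) /\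
        (forall k' : pmor (carrier v) (cofree (h t (A + B) C)),
           is_cofunctor v (cofreeC (h t (A + B) C)) k' ->
           pcomp (dcomp t mu A (A + B) C) (pcomp (tens_map i k') (unitL (carrier v))) = f ->
           pcomp (dcomp t mu B (A + B) C) (pcomp (tens_map j k') (unitL (carrier v))) = g ->
           k' = k).
Proof.
  intros Hm A B.
  exists (isg t eta (@inl A B)), (isg t eta (@inr A B)).
  split; [apply isg_cof|split; [apply isg_cof|]].
  intros C v Hv f g Hf Hg.
  destruct (normalize v Hv) as [X [D [idm [cod [comp Ev]]]]]. subst v.
  set (thA := pcomp (rt _) f). set (thB := pcomp (rt _) g).
  set (psi := merge t thA thB).
  set (k := unf idm cod comp psi).
  assert (Hk : is_cofunctor (ncomon X D idm cod comp) (cofreeC (h t (A + B) C)) k) by (apply unf_cof; exact Hv).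
  assert (Rt : forall A0 (sg : A0 -> A + B) (k0 : pmor (Poly X D) (cofree (h t (A + B) C))),
     pcomp (rt _) (pcomp (cmap (rsg t (C:=C) sg)) k0) = pcomp (rsg t sg) (pcomp (rt _) k0)).
  { intros A0 sg k0. change (pcomp (pcomp (rt _) (cmap (rsg t (C:=C) sg))) k0 = pcomp (rsg t sg) (pcomp (rt _) k0)).
    rewrite rt_cmap. reflexivity. }
  assert (Cof : forall A0 (sg : A0 -> A + B) (k0 : pmor (Poly X D) (cofree (h t (A + B) C))),
     is_cofunctor (ncomon X D idm cod comp) (cofreeC (h t (A + B) C)) k0 ->
     is_cofunctor (ncomon X D idm cod comp) (cofreeC (h t A0 C)) (pcomp (cmap (rsg t (C:=C) sg)) k0)).
  { intros A0 sg k0 H0. exact (cof_comp _ (cofreeC (h t (A + B) C)) (cofreeC (h t A0 C)) _ _ H0 (cmap_cof _)). }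
  exists k. split; [split; [exact Hk|split]|].
  - rewrite (Pcomp t eta mu A (A + B) C inl Hm).
    rewrite (cof_unique idm cod comp _ Hv (Cof _ _ _ Hk)).
    rewrite (cof_unique idm cod comp f Hv Hf). f_equal.
    rewrite Rt. unfold k. rewrite (rt_unf idm cod comp psi Hv). apply merge_l.
  - rewrite (Pcomp t eta mu B (A + B) C inr Hm).
    rewrite (cof_unique idm cod comp _ Hv (Cof _ _ _ Hk)).
    rewrite (cof_unique idm cod comp g Hv Hg). f_equal.
    rewrite Rt. unfold k. rewrite (rt_unf idm cod comp psi Hv). apply merge_r.
  - intros k' Hk' E1 E2.
    rewrite (Pcomp t eta mu A (A + B) C inl Hm) in E1.
    rewrite (Pcomp t eta mu B (A + B) C inr Hm) in E2.
    rewrite (cof_unique idm cod comp k' Hv Hk'). unfold k. f_equal.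
    apply joint_inj.
    + unfold psi. rewrite merge_l. rewrite <- Rt. unfold thA. f_equal. exact E1.
    + unfold psi. rewrite merge_r. rewrite <- Rt. unfold thB. f_equal. exact E2.
Qed.
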